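(* Let $(\mathscr{C},\mathbb{E},\mathfrak{s})$ be an extriangulated category such that for every object $X$ the morphism $X\to 0$ is an $\mathbb{E}$-inflation and $0\to X$ is an $\mathbb{E}$-deflation, and let $\Sigma\colon\mathscr{C}\to\mathscr{C}$ be the functor constructed in the context. Then $\Sigma$ is an additive auto-equivalence of $\mathscr{C}$.
   Context: An extriangulated category $(\mathscr{C},\mathbb{E},\mathfrak{s})$ is in the sense of Nakaoka–Palu: $\mathscr{C}$ additive, $\mathbb{E}\colon\mathscr{C}^{\mathrm{op}}\times\mathscr{C}\to Ab$ biadditive, $\mathfrak{s}$ an additive realisation assigning to $\delta\in\mathbb{E}(C,A)$ an equivalence class of sequences $[A\to B\to C]$, satisfying (ET1)–(ET4)$^{\mathrm{op}}$. For $a\colon A\to A'$ and $c\colon C'\to C$ write $a_*\delta=\mathbb{E}(C,a)(\delta)$ and $c^*\delta=\mathbb{E}(c,A)(\delta)$. A morphism $x\colon A\to B$ is an $\mathbb{E}$-inflation if $\mathfrak{s}(\delta)=[A\xrightarrow{x}B\to C]$ for some $\delta\in\mathbb{E}(C,A)$; dually $y\colon B\to C$ is an $\mathbb{E}$-deflation if $\mathfrak{s}(\delta)=[A\to B\xrightarrow{y}C]$ for some $\delta$. Construction of $\Sigma$: for each object $X$, choose an object $\Sigma X$ and $\delta_X\in\mathbb{E}(\Sigma X,X)$ with $\mathfrak{s}(\delta_X)=[X\to 0\to\Sigma X]$. For a morphism $f\colon X\to Y$, $\Sigma f\colon\Sigma X\to\Sigma Y$ is the unique morphism with $f_*\delta_X=(\Sigma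 f)^*\delta_Y$; this defines a functor. *)

(* Defs.v *)
From HB Require Import structures.
From mathcomp Require Import all_boot all_algebra.
Set Implicit Arguments. Unset Strict Implicit. Unset Printing Implicit Defensive.
Import GRing.Theory.
Local Open Scope ring_scope.

Record CatData := {
  obj :> Type;
  Mor : obj -> obj -> zmodType;
  idm : forall X, Mor X X;
  cmp : forall X Y Z, Mor Y Z -> Mor X Y -> Mor X Z }.

Arguments idm {c} X.
Arguments cmp {c X Y Z} g f.
Notation "g ∘ f" := (cmp g f) (at level 40, left associativity).

Section CatAxioms.
Variable K : CatData.
Definition preadditive_axioms : Prop :=
  ((forall (W X Y Z : K) (h : Mor Y Z) (g : Mor X Y) (f : Mor W X),
          h ∘ (g ∘ f) = (h ∘ g) ∘ f) /\
      (forall (X Y : K) (f : Mor X Y), idm Y ∘ f = f) /\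
      (forall (X Y : K) (f : Mor X Y), f ∘ idm X = f) /\
      (forall (X Y Z : K) (g g' : Mor Y Z) (f : Mor X Y),
          (g + g') ∘ f = g ∘ f + g' ∘ f) /\
      (forall (X Y Z : K) (g : Mor Y Z) (f f' : Mor X Y),
          g ∘ (f + f') = g ∘ f + g ∘ f')).

Definition is_zero_obj (Z : K) : Prop :=
  forall X : K, (forall f g : Mor Z X, f = g) /\ (forall f g : Mor X Z, f = g).

Definition is_iso (X Y : K) (f : Mor X Y) : Prop :=
  exists g : Mor Y X, g ∘ f = idm X /\ f ∘ g = idm Y.

Definition is_biprod (A C P : K) (i1 : Mor A P) (i2 : Mor C P)
    (p1 : Mor P A) (p2 : Mor P C) : Prop :=
  p1 ∘ i1 = idm A /\ p2 ∘ i2 = idm C /\ p1 ∘ i2 = 0 /\ p2 ∘ i1 = 0 /\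
      i1 ∘ p1 + i2 ∘ p2 = idm P.

Definition has_biprods : Prop :=
  forall A C : K, exists P (i1 : Mor A P) (i2 : Mor C P) (p1 : Mor P A)
    (p2 : Mor P C), is_biprod i1 i2 p1 p2.
End CatAxioms.

Record AddCat := {
  cdata :> CatData;
  preaddP : preadditive_axioms cdata;
  zo : cdata;
  zoP : is_zero_obj zo;
  biprodP : has_biprods cdata }.

Arguments zo {a}.

(*   Ext C A  = E(C,A);  push a d = a_* d;  pull c d = c^* d;         *)
(*   realizes d x y  means  s(d) = [A -x-> B -y-> C]  (i.e. the sequence  *)
(*   lies in the equivalence class s(d)).                             *)
Record ExtData := {
  acat :> AddCat;
  Ext : acat -> acat -> zmodType;
  push : forall (C A A' : acat), Mor A A' -> Ext C A -> Ext C A';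
  pull : forall (C C' A : acat), Mor C' C -> Ext C A -> Ext C' A;
  realizes : forall (C A : acat) (d : Ext C A) (B : acat), Mor A B -> Mor B C -> Prop }.

Arguments Ext {e}.
Arguments push {e C A A'} a d.
Arguments pull {e C C' A} c d.
Arguments realizes {e C A} d {B} x y.

Section ExtAxioms.
Variable K : ExtData.

Definition seq_equiv (A B B' C : K) (x : Mor A B) (y : Mor B C)
    (x' : Mor A B') (y' : Mor B' C) : Prop :=
  exists b : Mor B B', (is_iso b /\ b ∘ x = x' /\ y' ∘ b = y).

Definition ET1 : Prop :=
  ((forall (C A A' : K) (a : Mor A A') (d d' : Ext C A),
          push a (d + d') = push a d + push a d') /\
      (forall (C A A' : K) (a a' : Mor A A') (d : Ext C A),
          push (a + a') d = push a d + push a' d) /\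
      (forall (C C' A : K) (c : Mor C' C) (d d' : Ext C A),
          pull c (d + d') = pull c d + pull c d') /\
      (forall (C C' A : K) (c c' : Mor C' C) (d : Ext C A),
          pull (c + c') d = pull c d + pull c' d) /\
      (forall (C A : K) (d : Ext C A), push (idm A) d = d) /\
      (forall (C A : K) (d : Ext C A), pull (idm C) d = d) /\
      (forall (C A A' A'' : K) (a : Mor A A') (a' : Mor A' A'') (d : Ext C A),
          push (a' ∘ a) d = push a' (push a d)) /\
      (forall (C C' C'' A : K) (c : Mor C' C) (c' : Mor C'' C') (d : Ext C A),
          pull (c ∘ c') d = pull c' (pull c d)) /\
      (forall (C C' A A' : K) (a : Mor A A') (c : Mor C' C) (d : Ext C A),
          push a (pull c d) = pull c (push a d))).

Definition is_realization : Prop :=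
  ((forall (C A : K) (d : Ext C A),
          exists (B : K) (x : Mor A B) (y : Mor B C), realizes d x y) /\
      (forall (C A B B' : K) (d : Ext C A) (x : Mor A B) (y : Mor B C)
              (x' : Mor A B') (y' : Mor B' C),
          realizes d x y -> (realizes d x' y' <-> seq_equiv x y x' y')) /\
      (forall (A B C A' B' C' : K) (d : Ext C A) (d' : Ext C' A')
              (x : Mor A B) (y : Mor B C) (x' : Mor A' B') (y' : Mor B' C')
              (a : Mor A A') (c : Mor C C'),
          realizes d x y -> realizes d' x' y' -> push a d = pull c d' ->
          exists b : Mor B B', b ∘ x = x' ∘ a /\ c ∘ y = y' ∘ b)).

Definition ET2 : Prop :=
  (is_realization /\
      (forall (A C P : K) (i1 : Mor A P) (i2 : Mor C P) (p1 : Mor P A)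
              (p2 : Mor P C),
          is_biprod i1 i2 p1 p2 -> realizes (0 : Ext C A) i1 p2) /\
      (forall (A A' B B' C C' PA PB PC : K)
              (iA : Mor A PA) (iA' : Mor A' PA) (pA : Mor PA A) (pA' : Mor PA A')
              (iB : Mor B PB) (iB' : Mor B' PB) (pB : Mor PB B) (pB' : Mor PB B')
              (iC : Mor C PC) (iC' : Mor C' PC) (pC : Mor PC C) (pC' : Mor PC C')
              (d : Ext C A) (d' : Ext C' A')
              (x : Mor A B) (y : Mor B C) (x' : Mor A' B') (y' : Mor B' C'),
          is_biprod iA iA' pA pA' -> is_biprod iB iB' pB pB' ->
          is_biprod iC iC' pC pC' ->
          realizes d x y -> realizes d' x' y' ->
          realizes (push iA (pull pC d) + push iA' (pull pC' d'))
               (iB ∘ x ∘ pA + iB' ∘ x' ∘ pA')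
               (iC ∘ y ∘ pB + iC' ∘ y' ∘ pB'))).

Definition ET3 : Prop :=
  forall (A B C A' B' C' : K) (d : Ext C A) (d' : Ext C' A')
         (x : Mor A B) (y : Mor B C) (x' : Mor A' B') (y' : Mor B' C')
         (a : Mor A A') (b : Mor B B'),
    realizes d x y -> realizes d' x' y' -> b ∘ x = x' ∘ a ->
    exists c : Mor C C', c ∘ y = y' ∘ b /\ push a d = pull c d'.

Definition ET3op : Prop :=
  forall (A B C A' B' C' : K) (d : Ext C A) (d' : Ext C' A')
         (x : Mor A B) (y : Mor B C) (x' : Mor A' B') (y' : Mor B' C')
         (b : Mor B B') (c : Mor C C'),
    realizes d x y -> realizes d' x' y' -> c ∘ y = y' ∘ b ->
    exists a : Mor A A', b ∘ x = x' ∘ a /\ push a d = pull c d'.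

Definition ET4 : Prop :=
  forall (A B C D F : K) (d : Ext D A) (d' : Ext F B)
         (f : Mor A B) (f' : Mor B D) (g : Mor B C) (g' : Mor C F),
    realizes d f f' -> realizes d' g g' ->
    exists (E : K) (h' : Mor C E) (dd : Mor D E) (e : Mor E F) (d'' : Ext E A),
      (realizes d'' (g ∘ f) h' /\ h' ∘ g = dd ∘ f' /\ e ∘ h' = g' /\
          realizes (push f' d') dd e /\ pull dd d'' = d /\ push f d'' = pull e d').

Definition ET4op : Prop :=
  forall (A B C D F : K) (d : Ext A D) (d' : Ext B F)
         (f' : Mor D B) (f : Mor B A) (g' : Mor F C) (g : Mor C B),
    realizes d f' f -> realizes d' g' g ->
    exists (E : K) (h' : Mor E C) (dd : Mor E D) (e : Mor F E) (d'' : Ext A E),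
      (realizes d'' h' (f ∘ g) /\ g ∘ h' = f' ∘ dd /\ h' ∘ e = g' /\
          realizes (pull f' d') e dd /\ push dd d'' = d /\ pull f d'' = push e d').

Definition is_inflation (A B : K) (x : Mor A B) : Prop :=
  exists (C : K) (y : Mor B C) (d : Ext C A), realizes d x y.
Definition is_deflation (B C : K) (y : Mor B C) : Prop :=
  exists (A : K) (x : Mor A B) (d : Ext C A), realizes d x y.
End ExtAxioms.

Record ExtriCat := {
  edata :> ExtData;
  et1 : ET1 edata;
  et2 : ET2 edata;
  et3 : ET3 edata;
  et3op : ET3op edata;
  et4 : ET4 edata;
  et4op : ET4op edata }.

Definition additive_autoequivalence (K : AddCat) (S : K -> K)
    (F : forall X Y : K, Mor X Y -> Mor (S X) (S Y)) : Prop :=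
  ((forall X : K, F X X (idm X) = idm (S X)) /\
      (forall (X Y Z : K) (g : Mor Y Z) (f : Mor X Y),
          F X Z (g ∘ f) = F Y Z g ∘ F X Y f) /\
      (forall (X Y : K) (f f' : Mor X Y), F X Y (f + f') = F X Y f + F X Y f') /\
      (forall X Y : K, injective (F X Y)) /\
      (forall (X Y : K) (g : Mor (S X) (S Y)), exists f, F X Y f = g) /\
      (forall Y : K, exists (X : K) (u : Mor (S X) Y), is_iso u)).
Arguments additive_autoequivalence {K} S F.

(* Main.v *)
Require Import Defs.
From HB Require Import structures.
From mathcomp Require Import all_boot all_algebra.
Local Open Scope ring_scope.
Import GRing.Theory.

Section Helpers.
Context {K : ExtriCat}.

Lemma cmpA {W X Y Z : K} (h : Mor Y Z) (g : Mor X Y) (f : Mor W X) :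
  h ∘ (g ∘ f) = (h ∘ g) ∘ f.
Proof. by case: (preaddP K) => H _; apply: H. Qed.
Lemma cmp1l {X Y : K} (f : Mor X Y) : idm Y ∘ f = f.
Proof. by case: (preaddP K) => _ [H _]; apply: H. Qed.
Lemma cmp1r {X Y : K} (f : Mor X Y) : f ∘ idm X = f.
Proof. by case: (preaddP K) => _ [_ [H _]]; apply: H. Qed.
Lemma cmpDr {X Y Z : K} (g : Mor Y Z) (f f' : Mor X Y) :
  g ∘ (f + f') = g ∘ f + g ∘ f'.
Proof. by case: (preaddP K) => _ [_ [_ [_ H]]]; apply: H. Qed.

Lemma cmpDl {X Y Z : K} (g g' : Mor Y Z) (f : Mor X Y) :
  (g + g') ∘ f = g ∘ f + g' ∘ f.
Proof. by case: (preaddP K) => _ [_ [_ [H _]]]; apply: H. Qed.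

Lemma x_eq0 (Z : zmodType) (x : Z) : x = x + x -> x = 0.
Proof. by move/(congr1 (fun t => t - x)); rewrite subrr addrK. Qed.

Lemma cmp0r {X Y Z : K} (g : Mor Y Z) : g ∘ (0 : Mor X Y) = 0.
Proof. by apply: x_eq0; rewrite -cmpDr addr0. Qed.

Lemma cmp0l {X Y Z : K} (f : Mor X Y) : (0 : Mor Y Z) ∘ f = 0.
Proof. by apply: x_eq0; rewrite -cmpDl addr0. Qed.

Lemma to_zo {X : K} (f g : Mor X zo) : f = g.
Proof. by case: (zoP (a:=K) X) => _ H; apply: H. Qed.
Lemma from_zo {X : K} (f g : Mor zo X) : f = g.
Proof. by case: (zoP (a:=K) X) => H _; apply: H. Qed.

Lemma pushD {C A A' : K} (a a' : Mor A A') (d : Ext C A) :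
  push (a + a') d = push a d + push a' d.
Proof. by case: (et1 K) => _ [H _]; apply: H. Qed.
Lemma pullD {C C' A : K} (c c' : Mor C' C) (d : Ext C A) :
  pull (c + c') d = pull c d + pull c' d.
Proof. by case: (et1 K) => _ [_ [_ [H _]]]; apply: H. Qed.
Lemma push1 {C A : K} (d : Ext C A) : push (idm A) d = d.
Proof. by case: (et1 K) => _ [_ [_ [_ [H _]]]]; apply: H. Qed.
Lemma pull1 {C A : K} (d : Ext C A) : pull (idm C) d = d.
Proof. by case: (et1 K) => _ [_ [_ [_ [_ [H _]]]]]; apply: H. Qed.
Lemma pushM {C A A' A'' : K} (a : Mor A A') (a' : Mor A' A'') (d : Ext C A) :
  push (a' ∘ a) d = push a' (push a d).
Proof. by case: (et1 K) => _ [_ [_ [_ [_ [_ [H _]]]]]]; apply: H. Qed.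
Lemma pullM {C C' C'' A : K} (c : Mor C' C) (c' : Mor C'' C') (d : Ext C A) :
  pull (c ∘ c') d = pull c' (pull c d).
Proof. by case: (et1 K) => _ [_ [_ [_ [_ [_ [_ [H _]]]]]]]; apply: H. Qed.
Lemma push_pull {C C' A A' : K} (a : Mor A A') (c : Mor C' C) (d : Ext C A) :
  push a (pull c d) = pull c (push a d).
Proof. by case: (et1 K) => _ [_ [_ [_ [_ [_ [_ [_ H]]]]]]]; apply: H. Qed.
Lemma push0d {C A A' : K} (d : Ext C A) : push (0 : Mor A A') d = 0.
Proof. by apply: x_eq0; rewrite -pushD addr0. Qed.
Lemma pull0d {C C' A : K} (d : Ext C A) : pull (0 : Mor C' C) d = 0.
Proof. by apply: x_eq0; rewrite -pullD addr0. Qed.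
Lemma pushB {C A A' : K} (a a' : Mor A A') (d : Ext C A) :
  push (a - a') d = push a d - push a' d.
Proof.
have H : push (- a') d = - push a' d.
  by apply/eqP; rewrite -addr_eq0 -pushD addNr push0d.
by rewrite pushD H.
Qed.
Lemma pullB {C C' A : K} (c c' : Mor C' C) (d : Ext C A) :
  pull (c - c') d = pull c d - pull c' d.
Proof.
have H : pull (- c') d = - pull c' d.
  by apply/eqP; rewrite -addr_eq0 -pullD addNr pull0d.
by rewrite pullD H.
Qed.

Lemma pull_inj0 {A C C' : K} (d : Ext C A) (x : Mor A zo) (y : Mor zo C)
  (c : Mor C' C) : realizes d x y -> pull c d = 0 -> c = 0.
Proof.
move=> Hd Hc.
have [[_ [_ Hlift]] [Hsplit _]] := et2 K.
have [P [i1 [i2 [p1 [p2 Hb]]]]] := biprodP (a:=K) A C'.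
have H0 := Hsplit _ _ _ _ _ _ _ Hb.
have [b [_ Hb2]] := Hlift _ _ _ _ _ _ _ d _ _ _ _ (idm A) c H0 Hd
  (etrans (push1 _) (esym Hc)).
case: Hb => _ [H22 _].
rewrite -(cmp1r c) -H22 cmpA Hb2 -cmpA.
by rewrite (to_zo (b ∘ i2) 0) cmp0r.
Qed.

Lemma push_inj0 {A A' C : K} (d : Ext C A) (x : Mor A zo) (y : Mor zo C)
  (a : Mor A A') : realizes d x y -> push a d = 0 -> a = 0.
Proof.
move=> Hd Ha.
have [[_ [_ Hlift]] [Hsplit _]] := et2 K.
have [P [i1 [i2 [p1 [p2 Hb]]]]] := biprodP (a:=K) A' C.
have H0 := Hsplit _ _ _ _ _ _ _ Hb.
have [b [Hb1 _]] := Hlift _ _ _ _ _ _ d 0 _ _ _ _ a (idm C) Hd H0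
  (etrans Ha (esym (pull1 _))).
case: Hb => H11 _.
rewrite -(cmp1l a) -H11 -cmpA -Hb1.
by rewrite (from_zo b 0) cmp0l cmp0r.
Qed.
End Helpers.

Theorem proposition3p7 (K : ExtriCat)
  (Hinf : forall X : K, is_inflation (0 : Mor X zo))
  (Hdef : forall X : K, is_deflation (0 : Mor zo X))
  (Sig : K -> K) (delta : forall X : K, Ext (Sig X) X)
  (Hdelta : forall X : K, realizes (delta X) (0 : Mor X zo) (0 : Mor zo (Sig X)))
  (SigF : forall X Y : K, Mor X Y -> Mor (Sig X) (Sig Y))
  (HSigF : forall (X Y : K) (f : Mor X Y),
      push f (delta X) = pull (SigF X Y f) (delta Y)) :
  additive_autoequivalence Sig SigF.
Proof.
have pull_inj : forall (A C C' : K) (d : Ext C A) (x : Mor A zo) (y : Mor zo C)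
  (c c' : Mor C' C), realizes d x y -> pull c d = pull c' d -> c = c'.
  move=> A C C' d x y c c' Hd H; apply/eqP; rewrite -subr_eq0; apply/eqP.
  by apply: (pull_inj0 _ _ _ _ Hd); rewrite pullB H subrr.
split.
  move=> X; apply: (pull_inj _ _ _ _ _ _ _ _ (Hdelta X)).
  by rewrite -HSigF push1 pull1.
split.
  move=> X Y Z g f; apply: (pull_inj _ _ _ _ _ _ _ _ (Hdelta Z)).
  by rewrite -HSigF pullM -HSigF -push_pull -HSigF pushM.
split.
  move=> X Y f f'; apply: (pull_inj _ _ _ _ _ _ _ _ (Hdelta Y)).
  by rewrite -HSigF pullD pushD !HSigF.
split.
  move=> X Y f f' H; apply/eqP; rewrite -subr_eq0; apply/eqP.
  by apply: (push_inj0 _ _ _ _ (Hdelta X)); rewrite pushB !HSigF H subrr.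
split.
  move=> X Y g.
  have [a [_ Ha]] := et3op (Hdelta X) (Hdelta Y) (b := 0 : Mor zo zo) (c := g)
    (etrans (cmp0r _) (esym (cmp0r _))).
  exists a; apply: (pull_inj _ _ _ _ _ _ _ _ (Hdelta Y)).
  by rewrite -HSigF Ha.
move=> Y.
have [A [x [d Hd]]] := Hdef Y.
have [c [_ Hc]] := et3 Hd (Hdelta A) (a := idm A) (b := 0 : Mor zo zo)
  (to_zo _ _).
have [c' [_ Hc']] := et3 (Hdelta A) Hd (a := idm A) (b := 0 : Mor zo zo)
  (to_zo _ _).
rewrite push1 in Hc; rewrite push1 in Hc'.
exists A, c', c; split.
  apply: (pull_inj _ _ _ _ _ _ _ _ (Hdelta A)).
  by rewrite pullM -Hc -Hc' pull1.
apply: (pull_inj _ _ _ _ _ _ _ _ Hd).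
by rewrite pullM -Hc' -Hc pull1.
Qed.
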